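(* Let $p$ be a stochastic choice function on $X$ and $M\in\mathcal N$. (a) There exists an MSC $\langle Q,\nu\rangle$ rationalizing $p$ such that $Q(M)$ is pairwise comparable if and only if $p(\cdot,M)$ is bounded in a cycle over every pair $(i,j)$ of distinct elements of $M$. (b) There exists an MSC $\langle Q,\nu\rangle$ rationalizing $p$ such that $Q(M)$ is fully comparable if and only if $p(i,M)>0$ for all $i\in M$, $p(i,\{i,j\})>0$ for all $i,j\in M$, and $p(\cdot,M)$ is bounded in a cycle over every pair $(i,j)$ of distinct elements of $M$.
   Context: $X$ is a finite set of alternatives; a menu is a nonempty subset of $X$, and $\mathcal N$ denotes the set of all menus. A stochastic choice function is a map $p:X\times\mathcal N\to[0,1]$ with $\sum_{i\in M}p(i,M)=1$ and $p(i,M)=0$ for $i\notin M$; $p(\cdot,M)$ denotes the row vector $(p(i,M))_{i\in M}$. For $M\in\mathcal N$ and $i,j\in M$ let $\delta_{ij}(M)=p(i,M)\,p(j,\{i,j\})-p(i,\{i,j\})\,p(j,M)$. An MSC (Markov stochastic choice model) $\langle Q,\nu\rangle$ consists of, for every menu $M$, a matrix $Q(M)=(q_{ij}(M))_{i,j\in M}$ with nonnegative entries and a probability distribution $\nu_M$ on $M$, such that for all $M\in\mathcal N$ and distinct $i,j\in M$: (A1) $q_{ii}(M)=1-\sum_{k\neq i}q_{ik}(M)>0$; (A2) if $q_{ij}(\{i,j\})=0$ then $q_{ji}(\{i,j\})>0$; (A3) $q_{ij}(\{i,j\})\,q_{ji}(M)=q_{ji}(\{i,j\})\,q_{ij}(M)$.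 For a right stochastic matrix $Q$ on $M$ and a distribution $\nu$ on $M$ define $\rho(\nu,Q)=\lim_{\alpha\to0^+}\sum_{t\ge0}\alpha(1-\alpha)^t\nu Q^t$ (the limit exists and satisfies $\rho(\nu,Q)(I-Q)=0$). $p$ is rationalized by the MSC $\langle Q,\nu\rangle$ if $p(\cdot,M)=\rho(\nu_M,Q(M))$ for every $M\in\mathcal N$. $Q(M)$ is pairwise comparable if for all distinct $i,j\in M$, $q_{ij}(M)=0$ implies $q_{ji}(M)>0$; it is fully comparable if $q_{ij}(M)>0$ for all distinct $i,j\in M$. A cycle on a set $M'=\{i_1,\dots,i_n\}$ (distinct elements in some order) is the set of ordered pairs $\{(i_1,i_2),\dots,(i_{n-1},i_n),(i_n,i_1)\}$. $p(\cdot,M)$ is bounded in a cycle over the pair $(i,j)$ if either $\delta_{ij}(M)=0$, or there exist $M'\subseteq M$ and a cycle on $M'$ containing $(i,j)$ such that all $\delta_{kl}(M)$, $(k,l)$ in the cycle, are strictly positive, or all are strictly negative. *)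

(* Defs.v *)
From HB Require Import structures.
From mathcomp Require Import all_boot all_order all_algebra.
From mathcomp Require Import all_classical all_reals all_analysis.
Set Implicit Arguments. Unset Strict Implicit. Unset Printing Implicit Defensive.
Import Order.TTheory GRing.Theory Num.Theory.
Import numFieldNormedType.Exports.
Local Open Scope ring_scope.


(* X is a finite type T; menus are nonempty sets M : {set T}.
   A stochastic choice function is p : T -> {set T} -> R (values on the
   empty set are irrelevant). *)

Section Defs.
Variables (R : realType) (T : finType).

Definition menu (M : {set T}) : Prop := M != finset.set0.

Definition stoch_choice (p : T -> {set T} -> R) : Prop :=
  forall M : {set T}, menu M ->
    (forall i, 0 <= p i M <= 1) /\
    \sum_(i in M) p i M = 1 /\
    (forall i, i \notin M -> p i M = 0).

Definition delta (p : T -> {set T} -> R) (M : {set T}) (i j : T) : R :=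
  p i M * p j [set i; j] - p i [set i; j] * p j M.

(* A cycle on M' = {i_1,...,i_n} is encoded by the duplicate-free sequence
   s = [:: i_1; ...; i_n]; its pairs are (x, next s x) for x in s. *)
Definition bounded_in_cycle (p : T -> {set T} -> R) (M : {set T}) (i j : T)
  : Prop :=
  delta p M i j = 0 \/
  exists s : seq T,
    [/\ uniq s, {subset s <= M}, i \in s, next s i = j &
        (cycle (fun k l => 0 < delta p M k l) s \/
         cycle (fun k l => delta p M k l < 0) s)].

(* Q M i j = q_ij(M), nu M i = nu_M(i); only entries with i, j in M matter. *)
Definition MSC (Q : {set T} -> T -> T -> R) (nu : {set T} -> T -> R) : Prop :=
  forall M : {set T}, menu M ->
    [/\ (forall i j, i \in M -> j \in M -> 0 <= Q M i j),
        (forall i, i \in M -> 0 <= nu M i),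
        \sum_(i in M) nu M i = 1,
        (* (A1) *)
        (forall i, i \in M ->
           Q M i i = 1 - \sum_(k in M | k != i) Q M i k /\ 0 < Q M i i) &
        forall i j, i \in M -> j \in M -> i != j ->
          (* (A2) *)
          (Q [set i; j] i j = 0 -> 0 < Q [set i; j] j i) /\
          (* (A3) *)
          Q [set i; j] i j * Q M j i = Q [set i; j] j i * Q M i j].

(* nu Q^t on the menu M (row vector indexed by elements of M). *)
Definition vpow (Q : {set T} -> T -> T -> R) (nu : {set T} -> T -> R)
  (M : {set T}) (t : nat) : T -> R :=
  iter t (fun v j => \sum_(i in M) v i * Q M i j) (nu M).

Definition abel_sum (Q : {set T} -> T -> T -> R) (nu : {set T} -> T -> R)
  (M : {set T}) (j : T) (alpha : R) : R :=
  limn (series (fun t : nat => alpha * (1 - alpha) ^+ t * vpow Q nu M t j)).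

Definition rationalizes (p : T -> {set T} -> R)
  (Q : {set T} -> T -> T -> R) (nu : {set T} -> T -> R) : Prop :=
  forall M : {set T}, menu M -> forall j, j \in M ->
    (abel_sum Q nu M j a @[a --> (0:R)^'+] --> p j M)%classic.

Definition pairwise_comparable (Q : {set T} -> T -> T -> R) (M : {set T})
  : Prop :=
  forall i j, i \in M -> j \in M -> i != j -> Q M i j = 0 -> 0 < Q M j i.

Definition fully_comparable (Q : {set T} -> T -> T -> R) (M : {set T})
  : Prop :=
  forall i j, i \in M -> j \in M -> i != j -> 0 < Q M i j.

End Defs.

(* Main.v *)
Require Import Defs.
From HB Require Import structures.
From mathcomp Require Import all_boot all_order all_algebra.
From mathcomp Require Import all_classical all_reals all_analysis.
From mathcomp Require Import lra ring.
Import Order.TTheory GRing.Theory Num.Theory.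
Import numFieldNormedType.Exports.
Local Open Scope ring_scope.

Section Abel.
Variable R : realType.

Lemma abel_const (a c : R) : 0 < a < 1 ->
  limn (series (fun t : nat => a * (1 - a) ^+ t * c)) = c.
Proof.
case/andP=> a0 a1.
have -> : (fun t : nat => a * (1 - a) ^+ t * c) = geometric (a * c) (1 - a).
  by apply/funext => t /=; rewrite mulrAC.
apply: cvg_lim; first exact: Rhausdorff.
have h : `|1 - a| < 1 by rewrite ger0_norm ?subr_ge0 ?ltW // ltrBlDr ltrDl.
have H := @cvg_geometric_series R (a * c) _ h.
have E : a * c * (1 - (1 - a))^-1 = c.
  by rewrite opprB addrC subrK mulrAC mulfV ?mul1r // gt_eqF.
by rewrite E in H.
Qed.
End Abel.

Section S.
Local Open Scope classical_set_scope.
Local Open Scope ring_scope.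
Context {R : realType} {T : finType}.
Implicit Types (Q : {set T} -> T -> T -> R) (nu : {set T} -> T -> R).

Lemma Qrow {Q nu N i} : MSC Q nu -> menu N -> i \in N ->
  \sum_(k in N) Q N i k = 1.
Proof.
move=> H mN iN; have [_ _ _ A1 _] := H N mN; have [E _] := A1 i iN.
by rewrite (bigD1 i) //= {1}E subrK.
Qed.

Lemma vpowS Q nu N t j :
  vpow Q nu N t.+1 j = \sum_(i in N) vpow Q nu N t i * Q N i j.
Proof. by []. Qed.

Lemma vpow_prop {Q nu N} : MSC Q nu -> menu N -> forall t,
  (forall j, j \in N -> 0 <= vpow Q nu N t j) /\ \sum_(j in N) vpow Q nu N t j = 1.
Proof.
move=> H mN; have [Q0 nu0 nu1 _ _] := H N mN.
elim=> [|t [IH1 IH2]]; first by split.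
split.
  move=> j jN; rewrite vpowS; apply: sumr_ge0 => i iN.
  by apply: mulr_ge0; [exact: IH1| exact: Q0].
under eq_bigr do rewrite vpowS.
rewrite exchange_big /= -{}IH2; apply: eq_bigr => i iN.
by rewrite -mulr_sumr (Qrow H mN iN) mulr1.
Qed.

Lemma vpow_le1 {Q nu N} t {j} : MSC Q nu -> menu N -> j \in N -> vpow Q nu N t j <= 1.
Proof.
move=> H mN jN; have [P1 P2] := vpow_prop H mN t.
rewrite -P2 (bigD1 j) //= lerDl; apply: sumr_ge0 => i /andP[iN _]; exact: P1.
Qed.

Lemma abel_cvg {Q nu N j} (a : R) : MSC Q nu -> menu N -> j \in N -> 0 < a < 1 ->
  cvgn (series (fun t : nat => a * (1 - a) ^+ t * vpow Q nu N t j)).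
Proof.
move=> H mN jN /andP[a0 a1].
have P1 t := (vpow_prop H mN t).1.
have ge0 : forall t, 0 <= a * (1 - a) ^+ t * vpow Q nu N t j.
  move=> t; apply: mulr_ge0; last exact: P1.
  by apply: mulr_ge0; [exact: ltW| apply: exprn_ge0; rewrite subr_ge0 ltW].
apply: (@nondecreasing_is_cvgn R (series (fun t : nat => a * (1 - a) ^+ t * vpow Q nu N t j))).
  rewrite seriesEnat /=.
  have := @nondecreasing_series R (fun t => a * (1 - a) ^+ t * vpow Q nu N t j) xpredT 0.
  apply=> n _ _; exact: ge0.
exists 1 => _ [n _ <-].
apply: (@le_trans _ _ (series (geometric a (1 - a)) n)).
  rewrite !seriesEnat /=; apply: ler_sum => t _ /=.
  rewrite -[leRHS]mulr1; apply: ler_wpM2l.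
    by apply: mulr_ge0; [exact: ltW| apply: exprn_ge0; rewrite subr_ge0 ltW].
  exact: vpow_le1.
have h : `|1 - a| < 1 by rewrite ger0_norm ?subr_ge0 ?ltW // ltrBlDr ltrDl.
apply: le_trans (geometric_le_lim n (ltW a0) _ h) _.
  by rewrite subr_gt0.
by rewrite opprB addrC subrK mulfV ?gt_eqF.
Qed.


Lemma abel_id Q nu (N : {set T}) (j : T) (a : R) (n : nat) :
  (1 - a) * \sum_(i in N) series (fun t : nat => a * (1 - a) ^+ t * vpow Q nu N t i) n * Q N i j
  = series (fun t : nat => a * (1 - a) ^+ t * vpow Q nu N t j) n.+1 - a * nu N j.
Proof.
elim: n => [|n IH].
  rewrite seriesS /series /= big_geq // big1 ?mulr0; last first.
    by move=> i _; rewrite big_geq // mul0r.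
  by rewrite expr0 mulr1 addr0 subrr.
rewrite [in RHS]seriesSr.
under eq_bigr do rewrite seriesSr mulrDl.
rewrite big_split mulrDr IH vpowS exprS.
rewrite addrAC; congr (_ + _ - _).
rewrite !mulr_sumr; apply: eq_bigr => i _; rewrite !mulrA.
by rewrite (mulrC (1 - a) a) -!mulrA.
Qed.

Lemma abel_lim {Q nu} {N : {set T}} {j : T} (a : R) : MSC Q nu -> menu N -> j \in N -> 0 < a < 1 ->
  series (fun t : nat => a * (1 - a) ^+ t * vpow Q nu N t j) @ \oo --> abel_sum Q nu N j a.
Proof. move=> H mN jN ha; exact: (abel_cvg a H mN jN ha). Qed.

Lemma abel_eq Q nu (N : {set T}) (j : T) (a : R) : MSC Q nu -> menu N -> j \in N -> 0 < a < 1 ->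
  (1 - a) * \sum_(i in N) abel_sum Q nu N i a * Q N i j = abel_sum Q nu N j a - a * nu N j.
Proof.
move=> H mN jN ha.
have L1 : (fun n => (1 - a) * \sum_(i in N) series (fun t : nat => a * (1 - a) ^+ t * vpow Q nu N t i) n * Q N i j) @ \oo --> (1 - a) * \sum_(i in N) abel_sum Q nu N i a * Q N i j.
  apply: cvgMr.
  apply: (@cvg_big _ _ +%R 0 _ add_continuous) => i iN.
  apply: cvgMl; exact: abel_lim.
have L2 : (fun n => series (fun t : nat => a * (1 - a) ^+ t * vpow Q nu N t j) n.+1 - a * nu N j) @ \oo --> abel_sum Q nu N j a - a * nu N j.
  apply: cvgB; last exact: cvg_cst.
  have := abel_lim a H mN jN ha; rewrite -cvg_shiftS; exact.
rewrite (funext (fun n => abel_id Q nu N j a n)) in L1.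
exact: (cvg_unique _ L1 L2).
Qed.

Lemma stationary {p : T -> {set T} -> R} {Q nu} {N : {set T}} {j : T} :
  MSC Q nu -> rationalizes p Q nu -> menu N -> j \in N ->
  \sum_(i in N) p i N * Q N i j = p j N.
Proof.
move=> H Hr mN jN.
have C i : i \in N -> abel_sum Q nu N i a @[a --> 0^'+] --> p i N by exact: Hr.
have Id : (fun a : R => a) @ 0^'+ --> (0 : R).
  by apply: cvg_at_right_filter; exact: cvg_id.
have L1 : (fun a => (1 - a) * \sum_(i in N) abel_sum Q nu N i a * Q N i j) @ 0^'+
   --> (1 - 0) * \sum_(i in N) p i N * Q N i j.
  apply: cvgM; first by apply: cvgB; [exact: cvg_cst| exact: Id].
  apply: (@cvg_big _ _ +%R 0 _ add_continuous) => i iN.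
  apply: cvgMl; exact: C.
have L2 : (fun a => abel_sum Q nu N j a - a * nu N j) @ 0^'+ --> p j N - 0 * nu N j.
  apply: cvgB; first exact: C.
  by apply: cvgMl; exact: Id.
have E : \forall a \near 0^'+, abel_sum Q nu N j a - a * nu N j =
    (1 - a) * \sum_(i in N) abel_sum Q nu N i a * Q N i j.
  apply: filterS2 (nbhs_right_gt (0:R)) (nbhs_right_lt (@ltr01 R)) => a a0 a1.
  by rewrite abel_eq // a0 a1.
have L3 : (fun a => (1 - a) * \sum_(i in N) abel_sum Q nu N i a * Q N i j) @ 0^'+
   --> p j N - 0 * nu N j.
  have NE := @near_eq_cvg _ _ _ (@filter_filter R _ (at_right_proper_filter 0)) _ _ E.
  exact: (cvg_trans NE L2).
have e1 := @cvg_lim _ (@Rhausdorff R) _ _ (at_right_proper_filter 0) _ _ L1.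
have e2 := @cvg_lim _ (@Rhausdorff R) _ _ (at_right_proper_filter 0) _ _ L3.
rewrite e1 in e2; move: e2.
by rewrite subr0 mul1r mul0r subr0.
Qed.

End S.

Section Cut.
Context {R : realType} {T : finType}.

Lemma next_last_uniq (x : T) (s : seq T) : uniq (x :: s) -> next (x :: s) (last x s) = x.
Proof.
move=> U; rewrite next_nth mem_last index_last //.
by rewrite nth_default.
Qed.

Lemma path_in {e : rel T} {M : {set T}} {x s} :
  (forall k l, e k l -> l \in M) -> path e x s -> {subset s <= M}.
Proof.
move=> He; elim: s x => [|y s IH] x //= /andP[exy ps] z.
rewrite inE => /orP[/eqP->|zs]; first exact: He exy.
exact: IH ps z zs.
Qed.

Lemma cut_cycle {g : T -> T -> R} {M : {set T}} {i j : T} :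
  (forall k l, g l k = - g k l) ->
  (forall k, k \in M -> \sum_(l in M) g k l = 0) ->
  i \in M -> j \in M -> 0 < g i j ->
  exists s : seq T, [/\ uniq s, {subset s <= M}, i \in s, next s i = j &
     cycle (fun k l => (k \in M) && (l \in M) && (0 < g k l)) s].
Proof.
move=> anti bal iM jM gij.
set e := (fun k l => (k \in M) && (l \in M) && (0 < g k l)).
have eM k l : e k l -> l \in M by case/andP=> /andP[].
have ji : connect e j i.
  apply/negPn/negP => nji.
  set S := [set k | connect e j k].
  have SM : S \subset M.
    apply/fintype.subsetP => k; rewrite inE => /connectP[s ps ->].
    case: s ps => [|y s] ps //=.
    have := path_in eM ps; apply; exact: mem_last.
  have jS : j \in S by rewrite /S inE; exact: connect0.
  have iS : i \notin S by rewrite /S inE.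
  have out k l : k \in S -> l \in M :\: S -> g k l <= 0.
    move=> kS; rewrite inE => /andP[lS lM]; rewrite leNgt; apply/negP => gkl.
    move/negP: lS; apply; rewrite inE.
    have jk : connect e j k by move: kS; rewrite inE.
    apply: connect_trans jk (connect1 _).
    by rewrite /e (fintype.subsetP SM k kS) lM gkl.
  have tot : \sum_(k in S) \sum_(l in M) g k l = 0.
    by apply: big1 => k kS; apply: bal; exact: (fintype.subsetP SM).
  have int : \sum_(k in S) \sum_(l in S) g k l = 0.
    have h : \sum_(k in S) \sum_(l in S) g k l = - \sum_(k in S) \sum_(l in S) g k l.
      rewrite [LHS]exchange_big /= -sumrN; apply: eq_bigr => k _.
      by rewrite -sumrN; apply: eq_bigr => l _; rewrite anti.
    lra.
  have ext : \sum_(k in S) \sum_(l in M :\: S) g k l < 0.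
    rewrite (bigD1 j) //= (bigD1 i) /=; last by rewrite inE iS.
    have a1 : g j i < 0 by rewrite anti oppr_lt0.
    have a2 : \sum_(l in M :\: S | l != i) g j l <= 0.
      by apply: sumr_le0 => l /andP[lMS _]; exact: out.
    have a3 : \sum_(k in S | k != j) \sum_(l in M :\: S) g k l <= 0.
      apply: sumr_le0 => k /andP[kS _]; apply: sumr_le0 => l lMS; exact: out.
    lra.
  have : \sum_(k in S) \sum_(l in M) g k l =
     \sum_(k in S) \sum_(l in S) g k l + \sum_(k in S) \sum_(l in M :\: S) g k l.
    rewrite -big_split /=; apply: eq_bigr => k _.
    by rewrite (big_setID S) /= (finset.setIidPr SM).
  lra.
case/connectP: ji => s0 ps0 li.
move: li; case: (shortenP ps0) => s ps us _ li'.
exists (j :: s); split => //.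
- move=> k; rewrite inE => /orP[/eqP->//|ks]; exact: (path_in eM ps).
- by rewrite li'; exact: mem_last.
- by rewrite li' next_last_uniq.
rewrite /= rcons_path ps -li' /e iM jM gij.
done.
Qed.

End Cut.

Section Basic.
Context {R : realType} {T : finType}.
Implicit Types (p : T -> {set T} -> R) (Q : {set T} -> T -> T -> R).

Lemma set2C (i j : T) : [set j; i] = [set i; j].
Proof. exact: finset.setUC. Qed.

Lemma menu2 (i j : T) : menu [set i; j].
Proof. by apply/finset.set0Pn; exists i; rewrite !inE eqxx. Qed.

Lemma sum_set2 (F : T -> R) (i j : T) : i != j ->
  \sum_(k in [set i; j]) F k = F i + F j.
Proof.
move=> ij; rewrite finset.big_setU1 /=. 
  by rewrite big_set1.
by rewrite inE.
Qed.

Lemma p_ge0 {p N} i : stoch_choice p -> menu N -> 0 <= p i N.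
Proof. by move=> sc mN; have [/(_ i)/andP[]] := sc N mN. Qed.

Lemma p_le1 {p N} i : stoch_choice p -> menu N -> p i N <= 1.
Proof. by move=> sc mN; have [/(_ i)/andP[]] := sc N mN. Qed.

Lemma p_sum {p N} : stoch_choice p -> menu N -> \sum_(i in N) p i N = 1.
Proof. by move=> sc mN; have [_ []] := sc N mN. Qed.

Lemma p_sum2 {p} i j : stoch_choice p -> i != j -> p i [set i; j] + p j [set i; j] = 1.
Proof. by move=> sc ij; rewrite -(sum_set2 (fun k => p k [set i; j])) // (p_sum sc (menu2 i j)). Qed.

Lemma p_single {p} i : stoch_choice p -> p i [set i; i] = 1.
Proof.
move=> sc; have := p_sum sc (menu2 i i).
by rewrite finset.setUid finset.big_set1.
Qed.

Lemma delta_anti p M i j : delta p M j i = - delta p M i j.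
Proof. rewrite /delta set2C; lra. Qed.

Lemma delta_id p M i : delta p M i i = 0.
Proof. rewrite /delta; lra. Qed.

End Basic.

Section W.
Context {R : realType} {T : finType}.

Definition piece (u v : T) (c : R) : T -> T -> R :=
  fun k l => if ((k == u) && (l == v)) || ((k == v) && (l == u)) then c else 0.

Lemma piece_sym u v c k l : piece u v c k l = piece u v c l k.
Proof. by rewrite /piece orbC (andbC (l == v)) (andbC (l == u)). Qed.

Lemma piece_ge0 u v c k l : 0 <= c -> 0 <= piece u v c k l.
Proof. by rewrite /piece; case: ifP. Qed.

Lemma piece_bal {d : T -> T -> R} {M : {set T}} {u v c k} :
  (forall a b, d b a = - d a b) -> u != v -> u \in M -> v \in M ->
  \sum_(l in M) piece u v c k l * d k l = c * ((k == u)%:R - (k == v)%:R) * d u v.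
Proof.
move=> anti uv uM vM.
have vu : (v == u) = false by apply/negbTE; rewrite eq_sym.
case: (eqVneq k u) => [->|ku].
  rewrite (bigD1 v) //= big1 /=.
    by rewrite /piece !eqxx /= (negbTE uv) subr0 mulr1 addr0.
  move=> l /andP[_ lv]; rewrite /piece eqxx (negbTE lv) (negbTE uv) /=.
  by rewrite mul0r.
case: (eqVneq k v) => [->|kv].
  rewrite (bigD1 u) //= big1 /=.
    by rewrite /piece !eqxx vu /= anti; lra.
  move=> l /andP[_ lu]; rewrite /piece eqxx (negbTE lu) vu /=.
  by rewrite mul0r.
rewrite big1 /=; first by rewrite subrr mulr0 mul0r.
by move=> l _; rewrite /piece (negbTE ku) (negbTE kv) /= mul0r.
Qed.

Lemma sum_next (s : seq T) (F : T -> R) : uniq s ->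
  \sum_(u <- s) F (next s u) = \sum_(u <- s) F u.
Proof.
move=> us; rewrite -(big_map (next s) xpredT F).
apply: perm_big; apply: uniq_perm => //.
  by rewrite (map_inj_uniq (can_inj (prev_next us))).
move=> x; apply/mapP/idP => [[u us' ->]|xs]; first by rewrite mem_next.
by exists (prev s x); [rewrite mem_prev| rewrite next_prev].
Qed.

Definition cpiece (s : seq T) (sg : R) (d : T -> T -> R) : T -> T -> R :=
  fun k l => \sum_(u <- s) piece u (next s u) (sg / d u (next s u)) k l.

Lemma cpiece_sym s sg d k l : cpiece s sg d k l = cpiece s sg d l k.
Proof. by apply: eq_bigr => u _; rewrite piece_sym. Qed.

Lemma cpiece_ge0 s sg d k l : (forall u, u \in s -> 0 < sg / d u (next s u)) ->
  0 <= cpiece s sg d k l.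
Proof.
move=> H; rewrite /cpiece big_seq; apply: sumr_ge0 => u us.
by apply: piece_ge0; apply: ltW; exact: H.
Qed.

Lemma cpiece_pos s sg d i : uniq s -> i \in s -> (forall u, u \in s -> 0 < sg / d u (next s u)) ->
  0 < cpiece s sg d i (next s i).
Proof.
move=> us iS H; rewrite /cpiece (big_rem i) //=.
have h1 : piece i (next s i) (sg / d i (next s i)) i (next s i) = sg / d i (next s i).
  by rewrite /piece !eqxx.
rewrite h1; apply: ltr_pwDl; first exact: H.
rewrite big_seq; apply: sumr_ge0 => u ur; apply: piece_ge0; apply: ltW; apply: H.
exact: (mem_rem ur).
Qed.

Lemma cpiece_bal (d : T -> T -> R) (M : {set T}) s sg k :
  (forall a b, d b a = - d a b) -> uniq s -> {subset s <= M} ->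
  (forall u, u \in s -> d u (next s u) != 0) ->
  \sum_(l in M) cpiece s sg d k l * d k l = 0.
Proof.
move=> anti us sM dn.
have dd a : d a a = 0 by have := anti a a; lra.
rewrite /cpiece.
under eq_bigr do rewrite mulr_suml.
rewrite exchange_big /=.
rewrite big_seq.
under eq_bigr => u us'.
  rewrite (piece_bal anti).
  - rewrite -mulrA (mulrC ((k == u)%:R - _)) mulrA divfK; last exact: dn.
    over.
  - by apply: contraNneq (dn u us') => <-; rewrite dd.
  - exact: sM.
  - by apply: sM; rewrite mem_next.
rewrite -big_seq /= -mulr_sumr sumrB.
by rewrite (sum_next s (fun u => (k == u)%:R) us) subrr mulr0.
Qed.

Definition wsym (w : T -> T -> R) := forall k l, w k l = w l k.
Definition wnn (w : T -> T -> R) := forall k l, 0 <= w k l.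
Definition wbal (d : T -> T -> R) (M : {set T}) (w : T -> T -> R) :=
  forall k, k \in M -> \sum_(l in M) w k l * d k l = 0.

Lemma pair_w {p : T -> {set T} -> R} {M : {set T}} {i j : T} :
  i \in M -> j \in M -> i != j -> bounded_in_cycle p M i j ->
  exists w, [/\ wsym w, wnn w, wbal (delta p M) M w & 0 < w i j].
Proof.
move=> iM jM ij [d0|[s [us sM iS ns [cyc|cyc]]]].
- exists (piece i j 1); split.
  + exact: piece_sym.
  + by move=> k l; apply: piece_ge0; exact: ler01.
  + move=> k kM; rewrite (piece_bal (delta_anti p M)) //.
    by rewrite d0 mulr0.
  + by rewrite /piece !eqxx ltr01.
- have H : forall u, u \in s -> 0 < 1 / delta p M u (next s u).
    by move=> u us'; rewrite mul1r invr_gt0; exact: (next_cycle cyc us').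
  exists (cpiece s 1 (delta p M)); split.
  + exact: cpiece_sym.
  + by move=> k l; apply: cpiece_ge0.
  + move=> k kM; apply: cpiece_bal => //.
      exact: delta_anti p M.
    by move=> u us'; apply: lt0r_neq0; exact: (next_cycle cyc us').
  + by rewrite -ns; apply: cpiece_pos.
- have H : forall u, u \in s -> 0 < -1 / delta p M u (next s u).
    move=> u us'; rewrite mulN1r oppr_gt0 invr_lt0; exact: (next_cycle cyc us').
  exists (cpiece s (-1) (delta p M)); split.
  + exact: cpiece_sym.
  + by move=> k l; apply: cpiece_ge0.
  + move=> k kM; apply: cpiece_bal => //.
      exact: delta_anti p M.
    by move=> u us'; apply: ltr0_neq0; exact: (next_cycle cyc us').
  + by rewrite -ns; apply: cpiece_pos.
Qed.

Lemma all_w (p : T -> {set T} -> R) (M : {set T}) :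
  (forall i j, i \in M -> j \in M -> i != j -> bounded_in_cycle p M i j) ->
  exists w, [/\ wsym w, wnn w, wbal (delta p M) M w &
     forall i j, i \in M -> j \in M -> i != j -> 0 < w i j].
Proof.
move=> Hb.
suff : forall L : seq (T * T), exists w, [/\ wsym w, wnn w, wbal (delta p M) M w &
     forall x, x \in L -> x.1 \in M -> x.2 \in M -> x.1 != x.2 -> 0 < w x.1 x.2].
  case/(_ (enum [set: T * T])) => w [h1 h2 h3 h4]; exists w; split => // i j iM jM ij.
  by apply: (h4 (i, j)) => //; rewrite mem_enum inE.
elim=> [|[i j] L [w [h1 h2 h3 h4]]].
  exists (fun _ _ => 0); split => //.
  by move=> k kM; rewrite big1 // => l _; rewrite mul0r.
case: (boolP [&& i \in M, j \in M & i != j]) => [/and3P[iM jM ij]|hn]; last first.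
  exists w; split => // x; rewrite inE => /orP[/eqP-> /= iM jM ij|xL]; last exact: h4.
  by move: hn; rewrite iM jM ij.
have [w' [g1 g2 g3 g4]] := pair_w iM jM ij (Hb i j iM jM ij).
exists (fun k l => w k l + w' k l); split.
- by move=> k l; rewrite h1 g1.
- by move=> k l; apply: addr_ge0.
- move=> k kM; under eq_bigr do rewrite mulrDl.
  by rewrite big_split /= h3 // g3 // addr0.
- move=> x; rewrite inE => /orP[/eqP-> /= _ _ _|xL xM1 xM2 x12].
    by apply: ltr_pwDr => //; exact: h2.
  by apply: ltr_pwDl; [exact: h4| exact: g2].
Qed.

End W.

Section Fwd.
Context {R : realType} {T : finType}.
Implicit Types (p : T -> {set T} -> R) (Q : {set T} -> T -> T -> R) (nu : {set T} -> T -> R).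

Lemma in2l (i j : T) : i \in [set i; j]. Proof. by rewrite !inE eqxx. Qed.
Lemma in2r (i j : T) : j \in [set i; j]. Proof. by rewrite !inE eqxx orbT. Qed.

Lemma binary_rel {p Q nu} {i j : T} : MSC Q nu -> rationalizes p Q nu -> i != j ->
  p i [set i; j] * Q [set i; j] i j = p j [set i; j] * Q [set i; j] j i.
Proof.
move=> H Hr ij.
have st := stationary H Hr (menu2 i j) (in2l i j).
rewrite sum_set2 // in st.
have row := Qrow H (menu2 i j) (in2l i j).
rewrite sum_set2 // in row.
have E : Q [set i; j] i i = 1 - Q [set i; j] i j by lra.
rewrite E in st; lra.
Qed.

Lemma f_sign {p Q nu} {M : {set T}} {k l : T} : stoch_choice p -> MSC Q nu -> rationalizes p Q nu ->
  menu M -> pairwise_comparable Q M -> k \in M -> l \in M -> k != l ->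
  exists c, 0 < c /\ p k M * Q M k l - p l M * Q M l k = c * delta p M k l.
Proof.
move=> sc H Hr mM pc kM lM kl.
have lk : l != k by rewrite eq_sym.
have bin := binary_rel H Hr kl.
have xy := p_sum2 k l sc kl.
have x0 : 0 <= p k [set k; l] := p_ge0 k sc (menu2 k l).
have y0 : 0 <= p l [set k; l] := p_ge0 l sc (menu2 k l).
have [Q0 _ _ _ A] := H M mM.
have [Q0' _ _ _ A'] := H [set k; l] (menu2 k l).
have a0 : 0 <= Q [set k; l] k l by apply: Q0'; [exact: in2l| exact: in2r].
have b0 : 0 <= Q [set k; l] l k by apply: Q0'; [exact: in2r| exact: in2l].
have [A2 A3] := A k l kM lM kl.
have [A2r _] := A l k lM kM lk; rewrite set2C in A2r.
have qkl0 : 0 <= Q M k l by exact: Q0.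
have qlk0 : 0 <= Q M l k by exact: Q0.
have pc1 := pc k l kM lM kl.
have pc2 := pc l k lM kM lk.
rewrite /delta.
case: (ltrgt0P (Q [set k; l] k l)) a0 => // [apos|aeq] _.
  case: (ltrgt0P (Q [set k; l] l k)) b0 => // [bpos|beq] _.
  -
    have ypos : 0 < p l [set k; l].
      rewrite lt_def y0 andbT; apply/negP => /eqP y_0.
      rewrite y_0 mul0r in bin.
      have : p k [set k; l] = 1 by lra.
      move=> x1; rewrite x1 mul1r in bin; lra.
    have qpos : 0 < Q M k l.
      rewrite lt_def qkl0 andbT; apply/negP => /eqP q_0.
      rewrite q_0 mulr0 in A3.
      move/eqP: A3; rewrite mulf_eq0 (gt_eqF apos) /= => /eqP q2.
      have := pc1 q_0; lra.
    have E : p l [set k; l] * Q M l k = p k [set k; l] * Q M k l.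
      apply: (mulfI (lt0r_neq0 apos)).
      have e1 := congr1 (fun z => p l [set k; l] * z) A3.
      have e2 := congr1 (fun z => z * Q M k l) bin.
      simpl in e1, e2; lra.
    exists (Q M k l / p l [set k; l]); split; first exact: divr_gt0.
    apply: (mulfI (lt0r_neq0 ypos)).
    rewrite mulrA mulrCA divff ?gt_eqF // mulr1 mulrBr.
    have e3 := congr1 (fun z => p l M * z) E; simpl in e3; lra.
  -
    rewrite beq mulr0 in bin.
    move/eqP: bin; rewrite mulf_eq0 (gt_eqF apos) orbF => /eqP x_0.
    rewrite beq mul0r in A3.
    move/eqP: A3; rewrite mulf_eq0 (gt_eqF apos) /= => /eqP q_0.
    exists (Q M k l); split; first by apply: pc2.
    have y1 : p l [set k; l] = 1 by lra.
    rewrite x_0 y1 q_0; lra.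
have bpos := A2 aeq.
rewrite aeq mulr0 in bin.
move/eqP: bin; rewrite eq_sym mulf_eq0 (gt_eqF bpos) orbF => /eqP y_0.
rewrite aeq mul0r in A3.
move/eqP: A3; rewrite eq_sym mulf_eq0 (gt_eqF bpos) /= => /eqP q_0.
exists (Q M l k); split; first by apply: pc1.
have x1 : p k [set k; l] = 1 by lra.
rewrite x1 y_0 q_0; lra.
Qed.

Lemma fwd_a p Q nu (M : {set T}) : stoch_choice p -> menu M -> MSC Q nu ->
  rationalizes p Q nu -> pairwise_comparable Q M ->
  forall i j, i \in M -> j \in M -> i != j -> bounded_in_cycle p M i j.
Proof.
move=> sc mM H Hr pc i j iM jM ij.
pose f := fun k l => p k M * Q M k l - p l M * Q M l k.
have anti : forall k l, f l k = - f k l by move=> k l; rewrite /f; lra.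
have bal : forall k, k \in M -> \sum_(l in M) f k l = 0.
  move=> k kM; rewrite /f sumrB -mulr_sumr (Qrow H mM kM) (stationary H Hr mM kM).
  by rewrite mulr1 subrr.
have fkk : forall k, f k k = 0 by move=> k; rewrite /f subrr.
have sgn : forall k l, k \in M -> l \in M -> f k l != 0 ->
    exists c, 0 < c /\ f k l = c * delta p M k l.
  move=> k l kM lM fkl; apply: (f_sign sc H Hr mM pc kM lM).
  by apply: contraNneq fkl => ->; rewrite fkk.
rewrite /bounded_in_cycle.
case: (ltrgt0P (delta p M i j)) => [dpos|dneg|d0]; last by left.
- right.
  have [c [c0 E]] := f_sign sc H Hr mM pc iM jM ij.
  have gij : 0 < f i j by rewrite /f E mulr_gt0.
  have [s [us sM iS ns cyc]] := cut_cycle anti bal iM jM gij.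
  exists s; split => //; left.
  apply: sub_cycle cyc => k l /andP[/andP[kM lM] fkl].
  have [c' [c0' E']] := sgn k l kM lM (lt0r_neq0 fkl).
  by rewrite E' pmulr_rgt0 in fkl.
- right.
  have [c [c0 E]] := f_sign sc H Hr mM pc iM jM ij.
  pose g := fun k l => - f k l.
  have antig : forall k l, g l k = - g k l by move=> k l; rewrite /g anti.
  have balg : forall k, k \in M -> \sum_(l in M) g k l = 0.
    by move=> k kM; rewrite /g sumrN bal ?oppr0.
  have gij : 0 < g i j by rewrite /g /f E oppr_gt0 pmulr_rlt0.
  have [s [us sM iS ns cyc]] := cut_cycle antig balg iM jM gij.
  exists s; split => //; right.
  apply: sub_cycle cyc => k l /andP[/andP[kM lM] gkl].
  have fkl : f k l < 0 by rewrite /g oppr_gt0 in gkl.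
  have [c' [c0' E']] := sgn k l kM lM (ltr0_neq0 fkl).
  by rewrite E' pmulr_rlt0 in fkl.
Qed.

Lemma fwd_b p Q nu (M : {set T}) : stoch_choice p -> menu M -> MSC Q nu ->
  rationalizes p Q nu -> fully_comparable Q M ->
  [/\ (forall i, i \in M -> 0 < p i M),
      (forall i j, i \in M -> j \in M -> 0 < p i [set i; j]) &
      (forall i j, i \in M -> j \in M -> i != j -> bounded_in_cycle p M i j)].
Proof.
move=> sc mM H Hr fc.
have pc : pairwise_comparable Q M.
  move=> i j iM jM ij q0; have := fc i j iM jM ij; rewrite q0 ltxx.
  done.
have [Q0 _ _ _ A] := H M mM.
split; last exact: (fwd_a p Q nu M sc mM H Hr pc).
- move=> i iM.
  have [k kM pk] : exists2 k, k \in M & 0 < p k M.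
    case: (boolP [exists k in M, 0 < p k M]) => [/existsP[k /andP[kM pk]]|hn].
      by exists k.
    have : \sum_(k in M) p k M <= 0.
      apply: sumr_le0 => k kM; rewrite leNgt; apply/negP => pk.
      by move/negP: hn; apply; apply/existsP; exists k; rewrite kM pk.
    by rewrite (p_sum sc mM) ler10.
  case: (eqVneq k i) => [<- //|ki].
  rewrite -(stationary H Hr mM iM) (bigD1 k) //=.
  have q := fc k i kM iM ki.
  have r : 0 <= \sum_(k0 in M | k0 != k) p k0 M * Q M k0 i.
    apply: sumr_ge0 => k0 /andP[k0M _]; apply: mulr_ge0; first exact: p_ge0.
    exact: Q0.
  have := mulr_gt0 pk q; lra.
move=> i j iM jM; case: (eqVneq i j) => [<-|ij]; first by rewrite p_single.
have ji : j != i by rewrite eq_sym.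
have qij := fc i j iM jM ij.
have qji := fc j i jM iM ji.
have [A2 A3] := A i j iM jM ij.
have [A2r _] := A j i jM iM ji; rewrite set2C in A2r.
have bin := binary_rel H Hr ij.
have xy := p_sum2 i j sc ij.
have x0 : 0 <= p i [set i; j] := p_ge0 i sc (menu2 i j).
have y0 : 0 <= p j [set i; j] := p_ge0 j sc (menu2 i j).
have [Q0' _ _ _ _] := H [set i; j] (menu2 i j).
have a0 : 0 <= Q [set i; j] i j by apply: Q0'; [exact: in2l| exact: in2r].
have b0 : 0 <= Q [set i; j] j i by apply: Q0'; [exact: in2r| exact: in2l].
have bpos : 0 < Q [set i; j] j i.
  rewrite lt_def b0 andbT; apply/negP => /eqP b_0.
  have apos := A2r b_0.
  rewrite b_0 mul0r in A3; move/eqP: A3; rewrite mulf_eq0 (gt_eqF apos) (gt_eqF qji).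
  done.
rewrite lt_def x0 andbT; apply/negP => /eqP x_0.
rewrite x_0 mul0r in bin; move/eqP: bin; rewrite eq_sym mulf_eq0 (gt_eqF bpos) orbF.
move/eqP => y_0; lra.
Qed.

End Fwd.

Section Bwd.
Context {R : realType} {T : finType}.

Definition Wc (w : T -> T -> R) (t : R) (M N : {set T}) (i j : T) : R :=
  if N == M then t * w i j else if #|N| == 2 then 2^-1 else 0.
Definition Qc (p : T -> {set T} -> R) w t M (N : {set T}) (i j : T) : R :=
  if i == j then 1 - \sum_(k in N | k != i) Wc w t M N i k * p k [set i; k]
  else Wc w t M N i j * p j [set i; j].
Definition nuc (p : T -> {set T} -> R) (N : {set T}) (i : T) : R := p i N.

Lemma Wc_sym w t M N i j : wsym w -> Wc w t M N i j = Wc w t M N j i.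
Proof. by move=> h; rewrite /Wc h. Qed.

Lemma Wc_ge0 w t M N i j : wnn w -> 0 <= t -> 0 <= Wc w t M N i j.
Proof.
move=> h t0; rewrite /Wc; case: ifP => _; first exact: mulr_ge0.
by case: ifP => _ //; rewrite invr_ge0 ler0n.
Qed.

Lemma pair_eq {N : {set T}} {i k} : #|N| = 2 -> i \in N -> k \in N -> i != k ->
  [set i; k] = N.
Proof.
move=> c iN kN ik; apply/eqP; rewrite eqEcard c cards2 ik andbT.
by apply/fintype.subsetP => x; rewrite !inE => /orP[/eqP->|/eqP->].
Qed.

Lemma Wc_bal (p : T -> {set T} -> R) (w : T -> T -> R) (t : R) (M N : {set T}) (j : T) : wbal (delta p M) M w -> menu N -> j \in N ->
  \sum_(i in N) Wc w t M N j i * delta p N j i = 0.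
Proof.
move=> hb mN jN; case: (eqVneq N M) => [NM|nM].
  subst N; rewrite /Wc eqxx; under eq_bigr do rewrite -mulrA.
  by rewrite -mulr_sumr hb ?mulr0.
rewrite /Wc (negbTE nM); case: ifP => c2; last first.
  by rewrite big1 // => i _; rewrite mul0r.
apply: big1 => i iN; case: (eqVneq j i) => [<-|ji]; first by rewrite delta_id mulr0.
rewrite /delta (pair_eq (eqP c2) jN iN ji).
by rewrite subrr mulr0.
Qed.

Lemma Wc_small (p : T -> {set T} -> R) (w : T -> T -> R) (t : R) (M N : {set T}) (i : T) : stoch_choice p -> wnn w -> 0 < t ->
  (forall i, i \in M -> t * \sum_(k in M) w i k < 1) -> menu N -> i \in N ->
  \sum_(k in N | k != i) Wc w t M N i k * p k [set i; k] < 1.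
Proof.
move=> sc hn t0 ts mN iN; case: (eqVneq N M) => [NM|nM].
  subst N; rewrite /Wc eqxx.
  apply: le_lt_trans (ts i iN).
  apply: (@le_trans _ _ (\sum_(k in M | k != i) t * w i k)).
    apply: ler_sum => k /andP[kM _]; apply: ler_piMr.
      exact: mulr_ge0 (ltW t0) (hn i k).
    exact: p_le1 sc (menu2 i k).
  rewrite mulr_sumr [leRHS](bigD1 i) //= lerDr; exact: mulr_ge0 (ltW t0) (hn i i).
rewrite /Wc (negbTE nM); case: ifP => c2; last first.
  by rewrite big1 ?ltr01 // => k _; rewrite mul0r.
have E : \sum_(k in N | k != i) 2^-1 * p k [set i; k] = 2^-1 * \sum_(k in N | k != i) p k N.
  rewrite mulr_sumr; apply: eq_bigr => k /andP[kN ki].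
  by rewrite (pair_eq (eqP c2) iN kN); [|rewrite eq_sym].
rewrite E.
have s1 := p_sum sc mN; rewrite (bigD1 i) //= in s1.
have p0 := p_ge0 i sc mN.
lra.
Qed.

Lemma stat_c (p : T -> {set T} -> R) (w : T -> T -> R) (t : R) (M N : {set T}) (j : T) :
  wsym w -> wbal (delta p M) M w -> menu N -> j \in N ->
  \sum_(i in N) p i N * Qc p w t M N i j = p j N.
Proof.
move=> hs hb mN jN.
rewrite (bigD1 j) //= /Qc eqxx.
under eq_bigr => i /andP[_ ij] do rewrite (negbTE ij).
have B := Wc_bal p w t M N j hb mN jN.
rewrite (bigD1 j) //= delta_id mulr0 add0r in B.
have C : \sum_(i in N | i != j) p i N * (Wc w t M N i j * p j [set i; j])
   - p j N * \sum_(k in N | k != j) Wc w t M N j k * p k [set j; k]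
   = - \sum_(i in N | i != j) Wc w t M N j i * delta p N j i.
  rewrite mulr_sumr -sumrB -sumrN; apply: eq_bigr => i _.
  rewrite /delta (Wc_sym _ _ _ _ i j hs) (set2C j i); ring.
move: C; rewrite B oppr0; lra.
Qed.

Lemma MSC_c (p : T -> {set T} -> R) (w : T -> T -> R) (t : R) (M : {set T}) :
  stoch_choice p -> wsym w -> wnn w -> wbal (delta p M) M w -> 0 < t ->
  (forall i, i \in M -> t * \sum_(k in M) w i k < 1) ->
  (forall i j, i \in M -> j \in M -> i != j -> 0 < w i j) ->
  MSC (Qc p w t M) (nuc p).
Proof.
move=> sc hs hn hb t0 ts hp N mN.
have small := fun i => Wc_small p w t M N i sc hn t0 ts mN.
split.
- move=> i j iN jN; rewrite /Qc; case: ifP => _.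
    by rewrite subr_ge0; apply: ltW; exact: small.
  apply: mulr_ge0; [exact: Wc_ge0 (ltW t0)| exact: p_ge0 sc (menu2 i j)].
- by move=> i iN; exact: p_ge0 sc mN.
- exact: p_sum sc mN.
- move=> i iN; split; last by rewrite /Qc eqxx subr_gt0; exact: small.
  rewrite /Qc eqxx; congr (_ - _); apply: eq_bigr => k /andP[_ ki].
  by rewrite eq_sym (negbTE ki).
move=> i j iN jN ij.
have ji : j != i by rewrite eq_sym.
have Wpos : 0 < Wc w t M [set i; j] i j.
  rewrite /Wc; case: ifP => [/eqP E|_].
    apply: mulr_gt0 => //; apply: hp => //; rewrite -E; [exact: (in2l i j) | exact: (in2r i j)].
  by rewrite cards2 ij /= invr_gt0 ltr0n.
split.
- rewrite /Qc (negbTE ij) (negbTE ji) => /eqP; rewrite mulf_eq0 (gt_eqF Wpos) /= => /eqP pj0.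
  have := p_sum2 i j sc ij; rewrite pj0 addr0 => pi1.
  by rewrite (Wc_sym _ _ _ _ j i hs) (set2C i j) pi1 mulr1.
rewrite /Qc (negbTE ij) (negbTE ji).
rewrite (Wc_sym _ _ _ _ j i hs) (Wc_sym _ _ _ _ j i hs) (set2C i j); ring.
Qed.

Lemma rat_c (p : T -> {set T} -> R) (w : T -> T -> R) (t : R) (M : {set T}) :
  wsym w -> wbal (delta p M) M w -> rationalizes p (Qc p w t M) (nuc p).
Proof.
move=> hs hb N mN j jN.
have vp : forall n i, i \in N -> vpow (Qc p w t M) (nuc p) N n i = p i N.
  elim=> [|n IH] i iN; first by [].
  rewrite vpowS (eq_bigr (fun k => p k N * Qc p w t M N k i)).
    exact: stat_c.
  by move=> k kN; rewrite IH.
apply: cvg_near_cst.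
apply: filterS2 (nbhs_right_gt (0:R)) (nbhs_right_lt (@ltr01 R)) => a a0 a1.
rewrite /abel_sum.
have -> : (fun n : nat => a * (1 - a) ^+ n * vpow (Qc p w t M) (nuc p) N n j)
    = (fun n : nat => a * (1 - a) ^+ n * p j N).
  by apply/funext => n; rewrite vp.
by apply: abel_const; rewrite a0 a1.
Qed.

Lemma bwd (p : T -> {set T} -> R) (M : {set T}) : stoch_choice p -> menu M ->
  (forall i j, i \in M -> j \in M -> i != j -> bounded_in_cycle p M i j) ->
  exists Q nu, [/\ MSC Q nu, rationalizes p Q nu &
    forall i j, i \in M -> j \in M -> i != j -> exists c, 0 < c /\
      Q M i j = c * p j [set i; j] /\ Q M j i = c * p i [set i; j]].
Proof.
move=> sc mM Hb.
have [w [hs hn hb hp]] := all_w p M Hb.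
pose S := \sum_(a in M) \sum_(b in M) w a b.
have S0 : 0 <= S by apply: sumr_ge0 => a _; apply: sumr_ge0 => b _; exact: hn.
pose t := (1 + S)^-1.
have t0 : 0 < t by rewrite /t invr_gt0; lra.
have ts : forall i, i \in M -> t * \sum_(k in M) w i k < 1.
  move=> i iM.
  have le : \sum_(k in M) w i k <= S.
    rewrite /S [leRHS](bigD1 i) //= lerDl; apply: sumr_ge0 => a _.
    by apply: sumr_ge0 => b _; exact: hn.
  rewrite /t mulrC ltr_pdivrMr; last by lra.
  lra.
exists (Qc p w t M), (nuc p); split.
- exact: MSC_c.
- exact: rat_c.
move=> i j iM jM ij.
have ji : j != i by rewrite eq_sym.
exists (t * w i j); split; first by apply: mulr_gt0 => //; exact: hp.
rewrite /Qc (negbTE ij) (negbTE ji) /Wc eqxx; split => //.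
by rewrite (hs j i) (set2C i j).
Qed.

End Bwd.

Theorem theorem2 (R : realType) (T : finType) (p : T -> {set T} -> R)
  (M : {set T}) :
  stoch_choice p -> menu M ->
  ((exists (Q : {set T} -> T -> T -> R) (nu : {set T} -> T -> R),
      [/\ MSC Q nu, rationalizes p Q nu & pairwise_comparable Q M]) <->
   (forall i j, i \in M -> j \in M -> i != j -> bounded_in_cycle p M i j))
  /\
  ((exists (Q : {set T} -> T -> T -> R) (nu : {set T} -> T -> R),
      [/\ MSC Q nu, rationalizes p Q nu & fully_comparable Q M]) <->
   [/\ (forall i, i \in M -> 0 < p i M),
       (forall i j, i \in M -> j \in M -> 0 < p i [set i; j]) &
       (forall i j, i \in M -> j \in M -> i != j -> bounded_in_cycle p M i j)]).
Proof.
move=> sc mM; split; split.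
- by case=> Q [nu [H Hr pc]]; exact: (fwd_a p Q nu M sc mM H Hr pc).
- move=> Hb; have [Q [nu [H Hr hc]]] := bwd p M sc mM Hb.
  exists Q, nu; split => // i j iM jM ij q0.
  have [c [c0 [E1 E2]]] := hc i j iM jM ij.
  rewrite E1 in q0; move/eqP: q0; rewrite mulf_eq0 (gt_eqF c0) /= => /eqP pj0.
  have := p_sum2 i j sc ij; rewrite pj0 addr0 => pi1.
  by rewrite E2 pi1 mulr1.
- by case=> Q [nu [H Hr fc]]; exact: (fwd_b p Q nu M sc mM H Hr fc).
- case=> hpos hpos2 Hb; have [Q [nu [H Hr hc]]] := bwd p M sc mM Hb.
  exists Q, nu; split => // i j iM jM ij.
  have [c [c0 [E1 _]]] := hc i j iM jM ij.
  rewrite E1 mulr_gt0 //.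
  by have := hpos2 j i jM iM; rewrite set2C.
Qed.
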